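(* Let $\Sigma$ be a finite alphabet. There is a family of linear-time properties $(\varphi_n)_{n\in\mathbb{N}}$ over $\Sigma$ such that, for every $n$, every (nondeterministic) parity automaton $\mathcal{A}$ over $\Sigma$ that is $n$-lasso-precise for $\varphi_n$ (i.e., $L(\mathcal{A})\subseteq\varphi_n$ and $L_n(L(\mathcal{A}))=L_n(\varphi_n)$) has at least $|\Sigma|^n$ states.
   Context: A linear-time property over $\Sigma$ is a set $\varphi \subseteq \Sigma^\omega$. A lasso of length $n$ is a pair $(u,v)$ with $u\in\Sigma^*$, $v\in\Sigma^+$, $|u\cdot v|=n$, inducing the word $u\cdot v^\omega$. For a property $\psi$, $L_n(\psi)=\{u\cdot v^\omega \in \psi \mid u\in\Sigma^*, v\in\Sigma^+, |u\cdot v|=n\}$. A nondeterministic parity automaton over $\Sigma$ is $\mathcal{A}=(Q,Q_0,\delta,\mu)$ with finite state set $Q$, initial states $Q_0\subseteq Q$, transition function $\delta: Q\times\Sigma\to\mathcal{P}(Q)$, and coloring $\mu: Q\to C$ for a finite $C\subset\mathbb{N}$. A run on $\alpha_1\alpha_2\cdots$ is a sequence $q_0q_1\cdots$ with $q_0\in Q_0$ and $q_{i+1}\in\delta(q_i,\alpha_{i+1})$; it is accepting if the highest color occurring infinitely often in $\mu(q_0)\mu(q_1)\cdots$ is even; $L(\mathcal{A})$ is the set of words having an accepting run. *)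

(* Defs.v *)
From mathcomp Require Import all_boot.
Unset Printing Implicit Defensive.

(* Infinite words over Sigma: alpha_1 alpha_2 ... is represented 0-indexed as
   w : nat -> Sigma with w i = alpha_{i+1}.  A linear-time property is a
   predicate on infinite words. *)
Definition word (Sigma : Type) := nat -> Sigma.
Definition property (Sigma : Type) := word Sigma -> Prop.

(* The word u . v^omega, where v = a :: v' (so v is nonempty, v in Sigma^+). *)
Definition lasso_word (Sigma : Type) (u : seq Sigma) (a : Sigma) (v' : seq Sigma)
  : word Sigma :=
  fun i => if i < size u then nth a u i
           else nth a (a :: v') ((i - size u) %% size (a :: v')).

Definition Ln (Sigma : Type) (n : nat) (psi : property Sigma) : property Sigma :=
  fun w => psi w /\
    exists (u : seq Sigma) (a : Sigma) (v' : seq Sigma),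
      size u + size (a :: v') = n /\ w = lasso_word Sigma u a v'.

(* Nondeterministic parity automaton (Q, Q0, delta, mu), Q finite,
   colors in nat (finitely many are used since Q is finite). *)
Record npa (Sigma : Type) := NPA {
  state : finType;
  init : {set state};
  delta : state -> Sigma -> {set state};
  color : state -> nat
}.
Arguments state {Sigma} n.
Arguments init {Sigma} n.
Arguments delta {Sigma} n _ _.
Arguments color {Sigma} n _.

Definition is_run {Sigma : Type} (A : npa Sigma) (w : word Sigma)
  (r : nat -> state A) : Prop :=
  r 0 \in init A /\ forall i, r i.+1 \in delta A (r i) (w i).

Definition inf_often_color {Sigma : Type} (A : npa Sigma) (r : nat -> state A)
  (c : nat) : Prop :=
  forall N, exists i, N <= i /\ color A (r i) = c.

Definition accepting {Sigma : Type} (A : npa Sigma) (r : nat -> state A) : Prop :=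
  exists c, inf_often_color A r c /\ ~~ odd c /\
    forall c', inf_often_color A r c' -> c' <= c.

Definition lang {Sigma : Type} (A : npa Sigma) : property Sigma :=
  fun w => exists r, is_run A w r /\ accepting A r.

Definition lasso_precise (Sigma : Type) (n : nat) (phi : property Sigma)
  (A : npa Sigma) : Prop :=
  (forall w, lang A w -> phi w) /\
  (forall w, Ln Sigma n (lang A) w <-> Ln Sigma n phi w).

(* Main.v *)
Require Import Defs.
From mathcomp Require Import all_boot.
From Stdlib Require Import ClassicalEpsilon.

Definition per (Sigma : Type) (n : nat) : property Sigma :=
  fun w => forall i, w i = w (i %% n).

Section S.
Variable Sigma : finType.
Variable m : nat.
Local Notation N := m.+1.

Definition wt (t : N.-tuple Sigma) : word Sigma :=
  lasso_word Sigma [::] (thead t) (behead t).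

Lemma hb (t : N.-tuple Sigma) : thead t :: behead t = t.
Proof. by case: t => [[|a s] Hs]. Qed.

Lemma wtE t j : wt t j = nth (thead t) t (j %% N).
Proof. by rewrite /wt /lasso_word /= subn0 hb size_tuple. Qed.

Lemma wt_per t : per Sigma N (wt t).
Proof. by move=> i; rewrite !wtE modn_mod. Qed.

Lemma wt_Ln t : Ln Sigma N (per Sigma N) (wt t).
Proof.
split; first exact: wt_per.
exists [::], (thead t), (behead t); split => //=.
by rewrite /= size_behead size_tuple.
Qed.

Variable A : npa Sigma.
Hypothesis HA : lasso_precise Sigma N (per Sigma N) A.

Lemma wt_lang t : lang A (wt t).
Proof. by have [_ H] := HA; have [] := (proj2 (H (wt t)) (wt_Ln t)). Qed.

Definition runof t : nat -> state A :=
  proj1_sig (constructive_indefinite_description _ (wt_lang t)).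

Lemma runofP t : is_run A (wt t) (runof t) /\ accepting A (runof t).
Proof. exact: (proj2_sig (constructive_indefinite_description _ (wt_lang t))). Qed.

Definition f t := runof t N.

Lemma f_inj : injective f.
Proof.
move=> t1 t2 Hf.
have [[I1 S1] _] := runofP t1.
have [[I2 S2] [c [Hc [Hev Hmax]]]] := runofP t2.
pose w3 i := if i < N then wt t1 i else wt t2 i.
pose r i := if i < N then runof t1 i else runof t2 i.
have Hio : forall c', inf_often_color A r c' <-> inf_often_color A (runof t2) c'.
  move=> c'; split => H M.
    have [i [Hi Hci]] := H (maxn M N); exists i; split.
      exact: leq_trans (leq_maxl _ _) Hi.
    by move: Hci; rewrite /r ltnNge (leq_trans (leq_maxr _ _) Hi).
  have [i [Hi Hci]] := H (maxn M N); exists i; split.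
    exact: leq_trans (leq_maxl _ _) Hi.
  by rewrite /r ltnNge (leq_trans (leq_maxr _ _) Hi).
have L3 : lang A w3.
  exists r; split; last first.
    exists c; split; first by apply/Hio.
    split => // c' /Hio; exact: Hmax.
  split; first by rewrite /r /=.
  move=> i; rewrite /r /w3.
  case: (ltnP i.+1 N) => Hi.
    rewrite (ltnW Hi). exact: (S1 i).
  case: (ltnP i N) => Hi2.
    have E : i.+1 = N by apply/eqP; rewrite eqn_leq Hi Hi2.
    by rewrite E; move: (S1 i); rewrite E -/(f t1) Hf /f.
  exact: S2.
have [Hsub _] := HA.
have P3 := Hsub _ L3.
apply: eq_from_tnth => j.
have Hj := ltn_ord j.
have := P3 (N + j).
rewrite /w3 modnDl (modn_small Hj) Hj ltnNge leq_addr /= => E.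
rewrite (tnth_nth (thead t1)) (tnth_nth (thead t1)).
move: E; rewrite !wtE modnDl (modn_small Hj) => <-.
by rewrite (set_nth_default (thead t1)) // size_tuple.
Qed.

End S.

Theorem theorem2 (Sigma : finType) :
  exists phi : nat -> property Sigma,
    forall n : nat, 0 < n ->
      forall A : npa Sigma, lasso_precise Sigma n (phi n) A ->
        #|Sigma| ^ n <= #|state A|.
Proof.
exists (per Sigma) => [[|m]] // _ A HA.
rewrite -card_tuple.
exact: leq_card (@f_inj Sigma m A HA).
Qed.
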